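(* Let $\mathbf{L}=(L,\le)$ be a finite lattice with more than two elements and let $(R,\vee,\circ)$ be a subsemiring of $(\mathrm{Res}_1(\mathbf{L}),\vee,\circ)$ such that $f_{a,0}\in R$ for all $a\in L\setminus\{1\}$, every $f\in R$ satisfies $f_{a,0}\le f$ for some $a\in L\setminus\{1\}$, and for all $a\in L\setminus\{0,1\}$, $b\in L$ there exists $f\in R$ with $f(a)=b$. Then $(R,\vee)$ has a neutral element if and only if $1$ is join-irreducible in $\mathbf{L}$. If this neutral element exists, it is right but not left absorbing in $(R,\vee,\circ)$.
   Context: $\mathrm{Res}_1(\mathbf{L})$ is the set of maps $f:L\to L$ preserving binary joins with $f(0)=0$ and $f(1)=1$, a semiring under pointwise join and composition, ordered pointwise. $f_{a,b}(x)=b$ if $x\le a$ and $1$ otherwise. $1$ is join-irreducible if $1\ne a\vee b$ for all $a,b\in L\setminus\{1\}$. An element $r$ is right absorbing if $s\circ r=r$ for all $s\in R$, left absorbing if $r\circ s=r$ for all $s\in R$. *)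

(* Defs.v *)
From HB Require Import structures.
From mathcomp Require Import all_boot all_order.
Set Implicit Arguments. Unset Strict Implicit. Unset Printing Implicit Defensive.
Import Order.TTheory.
Local Open Scope order_scope.

Section ResDefs.
Context {disp : Order.disp_t} {L : finTBLatticeType disp}.

Definition Res1 (f : {ffun L -> L}) : Prop :=
  [/\ forall x y : L, f (x `|` y) = f x `|` f y, f \bot = \bot & f \top = \top].

Definition fjoin (f g : {ffun L -> L}) : {ffun L -> L} := [ffun x => f x `|` g x].
Definition fcomp (s r : {ffun L -> L}) : {ffun L -> L} := [ffun x => s (r x)].

Definition fle (f g : {ffun L -> L}) : Prop := forall x, f x <= g x.

Definition fab (a b : L) : {ffun L -> L} := [ffun x => if x <= a then b else \top].

Definition subsemiring_Res1 (R : {set {ffun L -> L}}) : Prop :=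
  [/\ R != set0,
      forall f, f \in R -> Res1 f,
      forall f g, f \in R -> g \in R -> fjoin f g \in R
    & forall f g, f \in R -> g \in R -> fcomp f g \in R].

Definition join_neutral (R : {set {ffun L -> L}}) (e : {ffun L -> L}) : Prop :=
  e \in R /\ forall f, f \in R -> fjoin e f = f /\ fjoin f e = f.

Definition right_absorbing (R : {set {ffun L -> L}}) (r : {ffun L -> L}) : Prop :=
  forall s, s \in R -> fcomp s r = r.

Definition left_absorbing (R : {set {ffun L -> L}}) (r : {ffun L -> L}) : Prop :=
  forall s, s \in R -> fcomp r s = r.

Definition top_join_irreducible : Prop :=
  forall a b : L, a != \top -> b != \top -> a `|` b != \top.

End ResDefs.

(* Main.v *)
Require Import Defs.
From HB Require Import structures.
From mathcomp Require Import all_boot all_order.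
Import Order.TTheory.
Local Open Scope order_scope.

Section H.
Context {disp : Order.disp_t} {L : finTBLatticeType disp}.

Lemma mid_exists : (2 < #|L|)%N -> exists x : L, x != \bot /\ x != \top.
Proof.
move=> H2.
case: (pickP [pred x : L | (x != \bot) && (x != \top)]) => [x /andP[h1 h2] | H].
  by exists x.
have: (#|L| <= #|[set (\bot : L); \top]|)%N.
  apply: subset_leq_card; apply/subsetP => x _; move: (H x) => /= /negbT.
  by rewrite negb_and !negbK in_set2.
rewrite cards2; case: (_ != _) => /=; rewrite leqNgt ?H2 //.
by rewrite (@ltn_trans 2%N).
Qed.

Lemma bot_neq_top : (2 < #|L|)%N -> (\bot : L) != \top.
Proof.
move=> /mid_exists [x [h1 h2]]; apply/eqP => E.
by move: h1; rewrite -lex0 E lex1.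
Qed.

Lemma neutral_form (R : {set {ffun L -> L}}) e :
  subsemiring_Res1 R ->
  (forall a : L, a != \top -> fab a \bot \in R) ->
  join_neutral R e -> forall x, e x = if x == \top then \top else \bot.
Proof.
move=> [_ hres _ _] hfab [eR hn] x.
case: eqP => [->|/eqP nx]; first by case: (hres _ eR).
have := (hn _ (hfab _ nx)).1 => /(congr1 (fun g : {ffun L -> L} => g x)).
by rewrite /fjoin /fab !ffunE lexx joinx0.
Qed.

End H.

Theorem proposition7p1 (disp : Order.disp_t) (L : finTBLatticeType disp)
  (R : {set {ffun L -> L}}) :
  (2 < #|L|)%N ->
  subsemiring_Res1 R ->
  (forall a : L, a != \top -> fab a \bot \in R) ->
  (forall f, f \in R -> exists a : L, a != \top /\ fle (fab a \bot) f) ->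
  (forall a b : L, a != \bot -> a != \top -> exists f, f \in R /\ f a = b) ->
  ((exists e, join_neutral R e) <-> top_join_irreducible (L := L)) /\
  (forall e, join_neutral R e -> right_absorbing R e /\ ~ left_absorbing R e).
Proof.
move=> H2 hR hfab _ hsurj.
have bt := @bot_neq_top _ L H2.
have [_ hres _ _] := hR.
split; [split|].
- move=> [e he] a b na nb; apply/eqP => E.
  have [eR _] := he.
  have [hj _ _] := hres _ eR.
  have := hj a b; rewrite E !(neutral_form _ _ hR hfab he) (negbTE na) (negbTE nb) eqxx joinxx.
  by move=> /esym/eqP; rewrite (negbTE bt).
- move=> hirr.
  pose m := \join_(x : L | x != \top) x.
  have mt : m != \top.
    rewrite /m; apply: (big_ind (fun y : L => y != \top)) => //.
  have em : forall x : L, fab m \bot x = if x == \top then \top else \bot.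
    move=> x; rewrite /fab ffunE; case: eqP => [->|/eqP nx].
      by rewrite ifF //; apply/negbTE; rewrite le1x.
    by rewrite (joins_sup (P := fun x : L => x != \top) (fun x => x)).
  exists (fab m \bot); split; first exact: hfab.
  move=> f fR; have [_ _ ft] := hres _ fR.
  split; apply/ffunP => x; rewrite /fjoin ffunE em; case: eqP => [->|_];
    by rewrite ?ft ?joinxx ?join0x ?joinx0.
- move=> e he; split.
  + move=> s sR; have [_ s0 s1] := hres _ sR.
    apply/ffunP => x; rewrite /fcomp ffunE !(neutral_form _ _ hR hfab he).
    by case: eqP.
  + move=> hl.
    have [x [x0 x1]] := @mid_exists _ L H2.
    have [s [sR sx]] := hsurj x \top x0 x1.
    have := hl s sR => /(congr1 (fun g : {ffun L -> L} => g x)).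
    rewrite /fcomp ffunE sx !(neutral_form _ _ hR hfab he) eqxx (negbTE x1).
    by move/eqP; rewrite eq_sym (negbTE bt).
Qed.
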